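(* Let $K\in M_N(\mathbb C)$ satisfy $K^*=-K$, and let $\alpha=q/2$. If $b(t)$, $t$ in an interval, is a continuously differentiable curve of positive elements of $M_N(\mathbb C)$ solving $$\dot b=b^{\alpha}K-Kb^{\alpha},$$ and $s\ge 1$, then $\|b(t)\|_s$ is constant, and the eigenvalues of $b(t)$ and their multiplicities do not depend on $t$. In particular the operator norm $\|b(t)\|$ is constant.
   Context: $p=2n\ge2$ is a fixed even integer and $q=p/(p-1)$ is its conjugate exponent. $\tau(x)=\frac1N\operatorname{Re}\operatorname{Tr}(x)$, $|x|=(x^*x)^{1/2}$, and $\|x\|_s=\tau(|x|^s)^{1/s}$. $b^\alpha$ denotes the positive power of the positive matrix $b$ via functional calculus. *)

(* Defs.v *)
From HB Require Import structures.
From mathcomp Require Import all_boot all_order all_algebra.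
From mathcomp Require Import sesquilinear spectral.
From mathcomp Require Import all_classical all_reals all_analysis.
From mathcomp Require Import complex.
Set Implicit Arguments. Unset Strict Implicit. Unset Printing Implicit Defensive.
Import Order.TTheory GRing.Theory Num.Theory.
Import numFieldNormedType.Exports.
Local Open Scope classical_set_scope.
Local Open Scope ring_scope.
Local Open Scope sesquilinear_scope.

Section Defs.
Variable R : realType.
Local Notation C := (R[i]).

Definition RtoC (x : R) : C := complex.Complex x 0.

Definition psdmx (N : nat) (b : 'M[C]_N) : Prop :=
  b ^t* = b /\ forall v : 'rV[C]_N, 0 <= (v *m b *m v ^t*) 0 0.

Definition spec_decomp (N : nat) (b : 'M[C]_N) (Ud : 'M[C]_N * 'rV[R]_N) : Prop :=
  Ud.1 \is unitarymx /\ (forall i, 0 <= Ud.2 0 i) /\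
  b = Ud.1 ^t* *m diag_mx (map_mx RtoC Ud.2) *m Ud.1.

(* functional calculus b^a for a positive matrix b and real a > 0:
   b^a = U^* diag(d_i^a) U  for any spectral decomposition (choice of one);
   the result does not depend on the chosen decomposition. *)
Definition mxpowR (N : nat) (b : 'M[C]_N) (a : R) : 'M[C]_N :=
  let Ud := xget (1%:M, 0) (spec_decomp b) in
  Ud.1 ^t* *m diag_mx (map_mx (fun x => RtoC (powR x a)) Ud.2) *m Ud.1.

Definition ntau (N : nat) (x : 'M[C]_N) : R := N%:R^-1 * complex.Re (\tr x).

(* |x| = (x^* x)^{1/2}, hence |x|^s = (x^* x)^{s/2};  ||x||_s = tau(|x|^s)^{1/s} *)
Definition snorm (N : nat) (s : R) (x : 'M[C]_N) : R :=
  powR (ntau (mxpowR (x ^t* *m x) (s / 2))) s^-1.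

Definition vnorm (N : nat) (v : 'cV[C]_N) : R :=
  Num.sqrt (\sum_i (complex.Re (v i 0) ^+ 2 + complex.Im (v i 0) ^+ 2)).

Definition opnorm (N : nat) (x : 'M[C]_N) : R :=
  sup [set vnorm (x *m v) | v in [set v : 'cV[C]_N | vnorm v <= 1]].

(* f : R -> R has derivative d at t within the set I (one-sided at endpoints) *)
Definition deriv_within (I : set R) (f : R -> R) (t d : R) : Prop :=
  (fun h : R => h^-1 * (f (t + h) - f t)) @ within (fun h => I (t + h)) (0 : R)^' --> d.

Definition C1_curve (I : set R) (N : nat) (b db : R -> 'M[C]_N) : Prop :=
  (forall t, I t -> forall i j,
      deriv_within I (fun u => complex.Re (b u i j)) t (complex.Re (db t i j)) /\
      deriv_within I (fun u => complex.Im (b u i j)) t (complex.Im (db t i j))) /\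
  (forall i j, {within I, continuous (fun t => complex.Re (db t i j))} /\
               {within I, continuous (fun t => complex.Im (db t i j))}).

Definition conj_exp (p : R) : R := p / (p - 1).
End Defs.

(* Main.v *)
Require Import Defs.
From HB Require Import structures.
From mathcomp Require Import all_boot all_order all_algebra.
From mathcomp Require Import sesquilinear spectral.
From mathcomp Require Import all_classical all_reals all_analysis.
From mathcomp Require Import complex.
From mathcomp Require Import ring lra.
From mathcomp Require Import perm.
Import Order.TTheory GRing.Theory Num.Theory.
Import numFieldNormedType.Exports.
Local Open Scope classical_set_scope.
Local Open Scope ring_scope.
Local Open Scope sesquilinear_scope.

Section A.
Local Set Implicit Arguments.
Local Unset Strict Implicit.
Variable R : realType.

Lemma near_ballR (x : R) (P : R -> Prop) :
  (exists2 d : R, 0 < d & forall y, `|y - x| < d -> P y) -> \forall y \near x, P y.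
Proof.
move=> [d d0 H]; apply/nbhs_ballP; exists d => //= y; rewrite /ball /= distrC; exact: H.
Qed.

Lemma ballR_near (x : R) (P : R -> Prop) :
  (\forall y \near x, P y) -> exists2 d : R, 0 < d & forall y, `|y - x| < d -> P y.
Proof.
move=> /nbhs_ballP [d /= d0 H]; exists d => // y hy; apply: H; rewrite /ball /= distrC //.
Qed.

Lemma dw_eps (I : set R) f t d : deriv_within I f t d ->
  forall e : R, 0 < e -> exists2 del : R, 0 < del & forall h, h != 0 -> `|h| < del -> I (t + h) ->
     `|h^-1 * (f (t + h) - f t) - d| < e.
Proof.
move=> H e e0; move/cvgrPdist_lt : H => /(_ e e0).
rewrite /within /= => /ballR_near [del del0 Hd]; exists del => // h h0 hd It.
rewrite distrC; apply: Hd => //; rewrite subr0 //.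
Qed.

Lemma dw_lip (I : set R) f t d : deriv_within I f t d ->
  exists2 del : R, 0 < del & forall y, I y -> `|y - t| < del ->
     `|f y - f t| <= (`|d| + 1) * `|y - t|.
Proof.
move=> /dw_eps /(_ 1 ltr01) [del del0 H]; exists del => // y Iy hy.
have [->|ne] := eqVneq y t; first by rewrite !subrr normr0 mulr0.
have h0 : y - t != 0 by rewrite subr_eq0.
have := H (y - t) h0 hy; rewrite addrC subrK => /(_ Iy) Hq.
have -> : f y - f t = (y - t) * ((y - t)^-1 * (f y - f t)).
  by rewrite mulrA mulfV // mul1r.
rewrite normrM mulrC ler_wpM2r //.
have := ler_normD ((y - t)^-1 * (f y - f t) - d) d; rewrite subrK => Hle.
apply: (le_trans Hle); rewrite addrC lerD2l ltW //.
Qed.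

Lemma lip_cont_near (f : R -> R) t (M del : R) (S : set R) : 0 < del ->
  (forall y, S y -> `|y - t| < del -> `|f y - f t| <= M * `|y - t|) ->
  forall e : R, 0 < e -> \forall y \near t, S y -> `|f t - f y| < e.
Proof.
move=> del0 H e e0; apply: near_ballR.
exists (Num.min del (e / (`|M| + 1))).
  by rewrite lt_min del0 divr_gt0 // ltr_wpDl.
move=> y; rewrite lt_min => /andP [h1 h2] Sy.
rewrite distrC; apply: (le_lt_trans (H y Sy h1)).
apply: (le_lt_trans (y := `|M| * `|y - t|)); first by rewrite ler_wpM2r // ler_norm.
have hM : 0 < `|M| + 1 by rewrite ltr_wpDl.
rewrite ltr_pdivlMr // in h2.
apply: (le_lt_trans _ h2); rewrite mulrC ler_wpM2l // lerDl //.
Qed.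

Lemma dw_const (I : set R) f : is_interval I ->
  (forall t, I t -> deriv_within I f t 0) -> forall t1 t2, I t1 -> I t2 -> f t1 = f t2.
Proof.
move=> hI hd.
suff H : forall t1 t2, I t1 -> I t2 -> t1 < t2 -> f t1 = f t2.
  move=> t1 t2 I1 I2; case: (ltgtP t1 t2) => [lt|gt|->//].
  - exact: H. - by apply/esym/H.
move=> t1 t2 I1 I2 lt12.
have Iin : forall y, t1 <= y <= t2 -> I y by move=> y; apply: hI.
have Iino : forall y, t1 < y < t2 -> I y.
  by move=> y /andP[a b]; apply: Iin; rewrite !ltW.
have := @MVT R f (fun _ => 0) t1 t2 lt12.
case.
- move=> x; rewrite in_itv /= => /andP [xa xb].
  have Ix : I x by apply: Iino; rewrite xa xb.
  have hl : (fun h : R => h^-1 *: ((f \o shift x) (h *: 1) - f x)) @ 0^' --> (0:R).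
    apply/cvgrPdist_lt => e e0.
    have [del del0 Hd] := dw_eps (hd x Ix) e0.
    rewrite /within /=; apply: near_ballR.
    exists (Num.min del (Num.min (x - t1) (t2 - x))).
      by rewrite !lt_min del0 !subr_gt0 xa xb.
    move=> h; rewrite !lt_min subr0 => /and3P [h1 h2 h3] h0.
    have Ixh : I (x + h).
      apply: Iino; apply/andP; split.
      - by move: h2; rewrite ltr_norml => /andP [+ _] => ?; lra.
      - by move: h3; rewrite ltr_norml => /andP [_ +] => ?; lra.
    have := Hd h h0 h1 Ixh; rewrite subr0 sub0r normrN /= /shift /=.
    by rewrite [h%:A]mulr1 [h + x]addrC.
  apply: DeriveDef; first by apply/cvgP: hl.
  by rewrite /derive; apply: cvg_lim.
- apply/continuous_within_itvP => //; split.
  + move=> x; rewrite in_itv /= => /andP [xa xb].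
    have Ix : I x by apply: Iino; rewrite xa xb.
    have [del del0 Hl] := dw_lip (hd x Ix).
    apply/cvgrPdist_lt => e e0.
    have Hn := lip_cont_near del0 Hl e0.
    have HI : \forall y \near x, I y.
      apply: near_ballR; exists (Num.min (x - t1) (t2 - x)).
        by rewrite lt_min !subr_gt0 xa xb.
      move=> y; rewrite lt_min => /andP [a b]; move: a b.
      rewrite !ltr_distl => /andP[a1 a2] /andP[b1 b2].
      apply: Iino; apply/andP; split; lra.
    by apply: filterS2 Hn HI => y H1 H2; apply: H1.
  + have [del del0 Hl] := dw_lip (hd t1 I1).
    apply/cvgrPdist_lt => e e0.
    have Hn := lip_cont_near del0 Hl e0.
    rewrite /at_right /within /=.
    have HI : \forall y \near t1, t1 < y -> I y.
      apply: near_ballR; exists (t2 - t1); first by rewrite subr_gt0.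
      move=> y; rewrite ltr_distl => /andP [a1 a2] ty.
      apply: Iino; apply/andP; split; lra.
    by apply: filterS2 Hn HI => y H1 H2 ty; apply: H1; apply: H2.
  + have [del del0 Hl] := dw_lip (hd t2 I2).
    apply/cvgrPdist_lt => e e0.
    have Hn := lip_cont_near del0 Hl e0.
    rewrite /at_left /within /=.
    have HI : \forall y \near t2, y < t2 -> I y.
      apply: near_ballR; exists (t2 - t1); first by rewrite subr_gt0.
      move=> y; rewrite ltr_distl => /andP [a1 a2] ty.
      apply: Iino; apply/andP; split; lra.
    by apply: filterS2 Hn HI => y H1 H2 ty; apply: H1; apply: H2.
- move=> c _; rewrite mul0r => /eqP; rewrite subr_eq0 => /eqP ->//.
Qed.

Lemma dw_ext (I : set R) f g t d : f =1 g -> deriv_within I f t d -> deriv_within I g t d.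
Proof. by move=> /funext ->. Qed.

Lemma dw_cst (I : set R) (c : R) t : deriv_within I (fun _ => c) t 0.
Proof.
rewrite /deriv_within; under eq_fun do rewrite subrr mulr0.
exact: cvg_cst.
Qed.

Lemma dw_add (I : set R) f g t df dg : deriv_within I f t df -> deriv_within I g t dg ->
  deriv_within I (fun u => f u + g u) t (df + dg).
Proof.
rewrite /deriv_within => Hf Hg.
have -> : (fun h => h^-1 * ((f (t + h) + g (t + h)) - (f t + g t))) =
  (fun h => h^-1 * (f (t + h) - f t)) + (fun h => h^-1 * (g (t + h) - g t)).
  by apply: funext => h; rewrite ?fctE /=; ring.
exact: cvgD.
Qed.

Lemma dw_opp (I : set R) f t df : deriv_within I f t df ->
  deriv_within I (fun u => - f u) t (- df).
Proof.
rewrite /deriv_within => Hf.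
have -> : (fun h => h^-1 * (- f (t + h) - - f t)) =
  - (fun h => h^-1 * (f (t + h) - f t)).
  by apply: funext => h; rewrite ?fctE /=; ring.
exact: cvgN.
Qed.

Lemma dw_sub (I : set R) f g t df dg : deriv_within I f t df -> deriv_within I g t dg ->
  deriv_within I (fun u => f u - g u) t (df - dg).
Proof. by move=> Hf Hg; apply: dw_add => //; apply: dw_opp. Qed.

Lemma dw_mul (I : set R) f g t df dg : deriv_within I f t df -> deriv_within I g t dg ->
  deriv_within I (fun u => f u * g u) t (df * g t + f t * dg).
Proof.
rewrite /deriv_within => Hf Hg.
set F := within _ _ in Hf Hg *.
have Hid : (fun h : R => h) @ F --> (0:R).
  apply: cvg_within_filter; exact: cvg_within.
have Hgc : (fun h => g (t + h)) @ F --> g t.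
  have -> : (fun h => g (t + h)) =
     (fun _ => g t) + (fun h : R => h) * (fun h => h^-1 * (g (t + h) - g t)).
    apply: funext => h; rewrite ?fctE /=; have [->|h0] := eqVneq h 0.
      by rewrite addr0 mul0r addr0.
    by rewrite mulrA mulfV // mul1r addrC subrK.
  rewrite -[X in _ --> X]addr0; apply: cvgD; first exact: cvg_cst.
  rewrite -(mul0r dg); exact: cvgM.
have -> : (fun h => h^-1 * (f (t + h) * g (t + h) - f t * g t)) =
  (fun h => h^-1 * (f (t + h) - f t)) * (fun h => g (t + h)) +
  (fun _ => f t) * (fun h => h^-1 * (g (t + h) - g t)).
  by apply: funext => h; rewrite ?fctE /=; ring.
apply: cvgD; apply: cvgM => //; exact: cvg_cst.
Qed.

Lemma dw_sum (I : set R) (T : Type) (s : seq T) (P : pred T) (F : T -> R -> R) dF t :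
  (forall x, P x -> deriv_within I (F x) t (dF x)) ->
  deriv_within I (fun u => \sum_(x <- s | P x) F x u) t (\sum_(x <- s | P x) dF x).
Proof.
move=> H; elim: s => [|a s IH].
  rewrite big_nil; apply: (@dw_ext _ (fun _ => 0)); last exact: dw_cst.
  by move=> u; rewrite big_nil.
rewrite big_cons; case: ifP => Pa.
  apply: (@dw_ext _ (fun u => F a u + \sum_(x <- s | P x) F x u)).
    by move=> u; rewrite big_cons Pa.
  exact: dw_add (H a Pa) IH.
apply: dw_ext IH => u; rewrite big_cons Pa //.
Qed.
End A.

Section B.
Local Set Implicit Arguments.
Local Unset Strict Implicit.
Variable R : realType.
Local Notation C := (R[i]).

Lemma ReD (x y : C) : complex.Re (x + y) = complex.Re x + complex.Re y.
Proof. by case: x; case: y. Qed.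
Lemma ImD (x y : C) : complex.Im (x + y) = complex.Im x + complex.Im y.
Proof. by case: x; case: y. Qed.
Lemma ReN (x : C) : complex.Re (- x) = - complex.Re x.
Proof. by case: x. Qed.
Lemma ImN (x : C) : complex.Im (- x) = - complex.Im x.
Proof. by case: x. Qed.
Lemma ReM (x y : C) : complex.Re (x * y) = complex.Re x * complex.Re y - complex.Im x * complex.Im y.
Proof. by case: x; case: y. Qed.
Lemma ImM (x y : C) : complex.Im (x * y) = complex.Re x * complex.Im y + complex.Im x * complex.Re y.
Proof. by case: x => a b; case: y => c d /=; ring. Qed.
Lemma Re0 : complex.Re (0 : C) = 0. Proof. by []. Qed.
Lemma Im0 : complex.Im (0 : C) = 0. Proof. by []. Qed.
Lemma Re_sum (T : Type) (s : seq T) (P : pred T) (F : T -> C) :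
  complex.Re (\sum_(x <- s | P x) F x) = \sum_(x <- s | P x) complex.Re (F x).
Proof. by elim/big_rec2: _ => // i y1 y2 _ <-; rewrite ReD. Qed.
Lemma Im_sum (T : Type) (s : seq T) (P : pred T) (F : T -> C) :
  complex.Im (\sum_(x <- s | P x) F x) = \sum_(x <- s | P x) complex.Im (F x).
Proof. by elim/big_rec2: _ => // i y1 y2 _ <-; rewrite ImD. Qed.

Variable N : nat.

Definition mdw (I : set R) (B : R -> 'M[C]_N) t (D : 'M[C]_N) :=
  forall i j, deriv_within I (fun u => complex.Re (B u i j)) t (complex.Re (D i j)) /\
              deriv_within I (fun u => complex.Im (B u i j)) t (complex.Im (D i j)).

Lemma mdw_cst I (A : 'M[C]_N) t : mdw I (fun _ => A) t 0.
Proof. by move=> i j; rewrite mxE; split; apply: dw_cst. Qed.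

Lemma mdw_add I B1 B2 t D1 D2 : mdw I B1 t D1 -> mdw I B2 t D2 ->
  mdw I (fun u => B1 u + B2 u) t (D1 + D2).
Proof.
move=> H1 H2 i j; have [a1 b1] := H1 i j; have [a2 b2] := H2 i j.
rewrite mxE ReD ImD; split.
- apply: (dw_ext _ (dw_add a1 a2)) => u; rewrite mxE ReD //.
- apply: (dw_ext _ (dw_add b1 b2)) => u; rewrite mxE ImD //.
Qed.

Lemma mdw_opp I B t D : mdw I B t D -> mdw I (fun u => - B u) t (- D).
Proof.
move=> H i j; have [a b] := H i j.
rewrite mxE ReN ImN; split.
- apply: (dw_ext _ (dw_opp a)) => u; rewrite mxE ReN //.
- apply: (dw_ext _ (dw_opp b)) => u; rewrite mxE ImN //.
Qed.

Lemma mdw_mul I B1 B2 t D1 D2 : mdw I B1 t D1 -> mdw I B2 t D2 ->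
  mdw I (fun u => B1 u *m B2 u) t (D1 *m B2 t + B1 t *m D2).
Proof.
move=> H1 H2 i j; split.
- apply: (@dw_ext _ I (fun u => \sum_(l <- index_enum 'I_N | true)
     (complex.Re (B1 u i l) * complex.Re (B2 u l j) - complex.Im (B1 u i l) * complex.Im (B2 u l j)))).
    by move=> u; rewrite mxE Re_sum; apply: eq_bigr => l _; rewrite ReM.
  have -> : complex.Re ((D1 *m B2 t + B1 t *m D2) i j) =
     \sum_(l <- index_enum 'I_N | true) ((complex.Re (D1 i l) * complex.Re (B2 t l j) + complex.Re (B1 t i l) * complex.Re (D2 l j))
          - (complex.Im (D1 i l) * complex.Im (B2 t l j) + complex.Im (B1 t i l) * complex.Im (D2 l j))).
    rewrite !mxE ReD !Re_sum -big_split; apply: eq_bigr => l _; rewrite !ReM /=; ring.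
  apply: dw_sum => l _; apply: dw_sub; apply: dw_mul.
  + exact: (H1 i l).1. + exact: (H2 l j).1. + exact: (H1 i l).2. + exact: (H2 l j).2.
- apply: (@dw_ext _ I (fun u => \sum_(l <- index_enum 'I_N | true)
     (complex.Re (B1 u i l) * complex.Im (B2 u l j) + complex.Im (B1 u i l) * complex.Re (B2 u l j)))).
    by move=> u; rewrite mxE Im_sum; apply: eq_bigr => l _; rewrite ImM.
  have -> : complex.Im ((D1 *m B2 t + B1 t *m D2) i j) =
     \sum_(l <- index_enum 'I_N | true) ((complex.Re (D1 i l) * complex.Im (B2 t l j) + complex.Re (B1 t i l) * complex.Im (D2 l j))
          + (complex.Im (D1 i l) * complex.Re (B2 t l j) + complex.Im (B1 t i l) * complex.Re (D2 l j))).
    rewrite !mxE ImD !Im_sum -big_split; apply: eq_bigr => l _; rewrite !ImM /=; ring.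
  apply: dw_sum => l _; apply: dw_add; apply: dw_mul.
  + exact: (H1 i l).1. + exact: (H2 l j).2. + exact: (H1 i l).2. + exact: (H2 l j).1.
Qed.

Lemma mdw_ext I B1 B2 t D : (forall u, B1 u = B2 u) -> mdw I B1 t D -> mdw I B2 t D.
Proof. by move=> /funext ->. Qed.

Fixpoint dpow (B D : 'M[C]_N) k := if k is k'.+1 then dpow B D k' *m B + B ^+ k' *m D else 0.

Lemma mdw_pow I Bf t D k : mdw I Bf t D -> mdw I (fun u => Bf u ^+ k) t (dpow (Bf t) D k).
Proof.
move=> H; elim: k => [|k IH] /=.
  by apply: (mdw_ext (B1 := fun _ => 1)) => [u|]; [rewrite expr0 | apply: mdw_cst].
apply: (mdw_ext (B1 := fun u => Bf u ^+ k *m Bf u)); first by move=> u; rewrite exprSr mulmxE.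
exact: mdw_mul.
Qed.

Lemma dw_tr I B t D : mdw I B t D ->
  deriv_within I (fun u => complex.Re (\tr (B u))) t (complex.Re (\tr D)).
Proof.
move=> H; rewrite /mxtrace Re_sum.
apply: (@dw_ext _ I (fun u => \sum_(i <- index_enum 'I_N | true) complex.Re (B u i i))).
  by move=> u; rewrite Re_sum.
by apply: dw_sum => i _; exact: (H i i).1.
Qed.

Lemma dpow_comm (B A K : 'M[C]_N) k : A *m B = B *m A ->
  exists S, dpow B (A *m K - K *m A) k = A *m S - S *m A.
Proof.
move=> AB; elim: k => [|k [S IH]] /=.
  by exists 0; rewrite mulmx0 mul0mx subrr.
have ABk : A *m B ^+ k = B ^+ k *m A.
  elim: k {IH} => [|k IHk]; first by rewrite expr0 mulmx1 mul1mx.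
  by rewrite exprSr -mulmxE mulmxA IHk -!mulmxA AB.
exists (S *m B + B ^+ k *m K).
rewrite IH mulmxBl mulmxBr !mulmxDr !mulmxDl !mulmxA ABk -!mulmxA AB.
rewrite !mulmxA; set x1 := A *m S *m B; set x2 := S *m B *m A; set x3 := B ^+ k *m A *m K; set x4 := B ^+ k *m K *m A.
by rewrite opprD !addrA; congr (_ + _); rewrite -!addrA; congr (_ + _); rewrite addrC.
Qed.

Lemma tr_comm0 (A S : 'M[C]_N) : \tr (A *m S - S *m A) = 0.
Proof. by rewrite raddfB /= mxtrace_mulC subrr. Qed.

Lemma tr_pow_const I (b db A : R -> 'M[C]_N) K : is_interval I ->
  (forall t, I t -> mdw I b t (db t)) ->
  (forall t, I t -> db t = A t *m K - K *m A t) ->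
  (forall t, I t -> A t *m b t = b t *m A t) ->
  forall k t1 t2, I t1 -> I t2 -> complex.Re (\tr (b t1 ^+ k)) = complex.Re (\tr (b t2 ^+ k)).
Proof.
move=> hI hd hode hc k; apply: (dw_const (f := fun u => complex.Re (\tr (b u ^+ k)))) => // t It.
have := dw_tr (mdw_pow k (hd t It)).
rewrite hode //; have [S ->] := dpow_comm K k (hc t It).
by rewrite tr_comm0.
Qed.
End B.

Section C.
Local Set Implicit Arguments.
Local Unset Strict Implicit.
Variable R : realType.
Variable N : nat.

Lemma psum_poly (d e : 'I_N -> R) : (forall k, \sum_i d i ^+ k = \sum_i e i ^+ k) ->
  forall p : {poly R}, \sum_i p.[d i] = \sum_i p.[e i].
Proof.
move=> H p; under eq_bigr do rewrite horner_coef; under [RHS]eq_bigr do rewrite horner_coef.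
rewrite exchange_big [RHS]exchange_big /=; apply: eq_bigr => j _.
by rewrite -!mulr_sumr H.
Qed.

Lemma count_tuple (d : 'I_N -> R) x :
  ((count_mem x [tuple d i | i < N])%:R : R) = \sum_i ((d i == x)%:R : R).
Proof.
rewrite -natr_sum; congr (_%:R).
rewrite /= count_map -sum1_count big_mkcond /=.
rewrite -big_enum /=; apply: eq_bigr => i _; by case: (d i == x).
Qed.

Lemma psum_perm (d e : 'I_N -> R) : (forall k, \sum_i d i ^+ k = \sum_i e i ^+ k) ->
  exists s : 'S_N, forall i, e i = d (s i).
Proof.
move=> H; have Hp := psum_poly H.
have Hc : perm_eq [tuple e i | i < N] [tuple d i | i < N].
  apply/allP => x _; apply/eqP.
  set L := [tuple d i | i < N] ++ [tuple e i | i < N].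
  pose p := \prod_(z <- L | z != x) ('X - z%:P).
  have pE : forall y, y \in L -> p.[y] = (y == x)%:R * p.[x].
    move=> y yL; have [->|ne] := eqVneq y x; first by rewrite mul1r.
    rewrite mul0r /p horner_prod; apply/eqP; rewrite prodf_seq_eq0.
    apply/hasP; exists y => //; rewrite ne /= !hornerE subrr //.
  have px0 : p.[x] != 0.
    rewrite /p horner_prod prodf_seq_neq0; apply/allP => z _; apply/implyP => zx.
    by rewrite !hornerE subr_eq0 eq_sym.
  have Hd : \sum_i p.[d i] = (count_mem x [tuple d i | i < N])%:R * p.[x].
    rewrite count_tuple mulr_suml; apply: eq_bigr => i _; apply: pE.
    by rewrite mem_cat; apply/orP; left; apply/mapP; exists i; rewrite ?mem_enum.
  have He : \sum_i p.[e i] = (count_mem x [tuple e i | i < N])%:R * p.[x].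
    rewrite count_tuple mulr_suml; apply: eq_bigr => i _; apply: pE.
    by rewrite mem_cat; apply/orP; right; apply/mapP; exists i; rewrite ?mem_enum.
  have := Hp p; rewrite Hd He => /(mulIf px0) /eqP; rewrite eqr_nat => /eqP ->//.
have [s Hs] := tuple_permP Hc; exists s => i.
have Hs' : [tuple e i | i < N] = [tuple tnth [tuple d i0 | i0 < N] (s i) | i < N].
  by apply: val_inj.
have := congr1 (fun t => tnth t i) Hs'.
by rewrite !tnth_mktuple.
Qed.
End C.

Section D.
Local Set Implicit Arguments.
Local Unset Strict Implicit.
Variable R : realType.
Local Notation C := (R[i]).
Variable N : nat.
Local Notation RtoC := (@RtoC R).

Lemma unit_tV (U : 'M[C]_N) : U \is unitarymx -> U^t* *m U = 1%:M.
Proof. by move=> /unitarymxP /mulmx1C. Qed.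

Lemma trC_mul m n p (A : 'M[C]_(m, n)) (B : 'M[C]_(n, p)) : (A *m B)^t* = B^t* *m A^t*.
Proof. by rewrite trmx_mul map_mxM. Qed.

Lemma RtoCE (x : R) : RtoC x = x%:C%C.
Proof. by []. Qed.

Lemma RtoC_is_rmorph : (forall x y : R, RtoC (x + y) = RtoC x + RtoC y) /\
  (forall x y : R, RtoC (x * y) = RtoC x * RtoC y).
Proof. by split => x y; rewrite !RtoCE ?rmorphD ?rmorphM. Qed.

Lemma RtoCX (x : R) k : RtoC (x ^+ k) = RtoC x ^+ k.
Proof. by rewrite !RtoCE rmorphXn. Qed.

Lemma ReRtoC (x : R) : complex.Re (RtoC x) = x. Proof. by []. Qed.

Lemma spec_pow b U (d : 'rV[R]_N) k : spec_decomp b (U, d) ->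
  b ^+ k = U^t* *m diag_mx (map_mx RtoC (\row_j (d 0 j ^+ k))) *m U.
Proof.
move=> [/= Uu [_ ->]]; elim: k => [|k IH].
  rewrite expr0.
  have -> : map_mx RtoC (\row_j (d 0 j ^+ 0)) = const_mx 1.
    by apply/matrixP => i j; rewrite !mxE expr0.
  by rewrite diag_const_mx mulmx1 unit_tV.
rewrite exprSr IH -mulmxE -!mulmxA [U *m (U^t* *m _)]mulmxA (unitarymxP Uu) mul1mx.
rewrite [diag_mx _ *m (diag_mx _ *m U)]mulmxA mulmx_diag; do 3 f_equal; apply/matrixP => i j.
by rewrite !mxE exprSr RtoC_is_rmorph.2.
Qed.

Lemma tr_conj (U D : 'M[C]_N) : U \is unitarymx -> \tr (U^t* *m D *m U) = \tr D.
Proof. by move=> Uu; rewrite mxtrace_mulC mulmxA (unitarymxP Uu) mul1mx. Qed.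

Lemma spec_tr_pow b U (d : 'rV[R]_N) k : spec_decomp b (U, d) ->
  complex.Re (\tr (b ^+ k)) = \sum_i d 0 i ^+ k.
Proof.
move=> H; rewrite (spec_pow k H) tr_conj; last by case: H.
rewrite mxtrace_diag Re_sum; apply: eq_bigr => i _; rewrite !mxE //.
Qed.

Lemma psd_spec (b : 'M[C]_N) : psdmx b -> exists Ud, spec_decomp b Ud.
Proof.
move=> [bh bpos].
have herm : b \is hermsymmx by apply/is_hermitianmxP; rewrite expr0 scale1r bh.
have nb := hermitian_normalmx herm.
have Eb := orthomx_spectralP nb.
have Pu := spectral_unitarymx b.
rewrite invmx_unitary // in Eb.
have spr := hermitian_spectral_diag_real herm.
set P := spectralmx b in Eb Pu; set sp := spectral_diag b in Eb spr.
have spE : map_mx RtoC (\row_j complex.Re (sp 0 j)) = sp.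
  apply/matrixP => i j; rewrite !mxE ord1 RtoCE RRe_real //.
  by move/mxOverP: spr; apply.
exists (P, \row_j complex.Re (sp 0 j)); split => //; split; last by rewrite /= spE.
move=> i; rewrite mxE.
have := bpos (delta_mx 0 i *m P).
rewrite Eb trC_mul !mulmxA -[delta_mx 0 i *m P *m P^t*]mulmxA (unitarymxP Pu) mulmx1.
rewrite -!mulmxA [P *m (P^t* *m _)]mulmxA (unitarymxP Pu) mul1mx mulmxA -rowE.
have -> : ((row i (diag_mx sp) *m (delta_mx 0 i : 'rV[C]_N)^t*) 0 0) = sp 0 i.
  rewrite !mxE (bigD1 i) //= big1 => [|k ki].
    by rewrite !mxE !eqxx /= mulr1n conjC1 mulr1 addr0.
  by rewrite !mxE eq_sym (negbTE ki) /= mulr0n mul0r.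
by rewrite lecE => /andP [_].
Qed.

Lemma spec_perm (X Y U V : 'M[C]_N) (d e : 'rV[R]_N) :
  spec_decomp X (U, d) -> spec_decomp Y (V, e) ->
  (forall k, complex.Re (\tr (X ^+ k)) = complex.Re (\tr (Y ^+ k))) ->
  exists s : 'S_N, forall i, e 0 i = d 0 (s i).
Proof.
move=> HX HY H; apply: (@psum_perm R N (fun i => d 0 i) (fun i => e 0 i)) => k.
by rewrite -(spec_tr_pow k HX) -(spec_tr_pow k HY).
Qed.

Lemma perm_unit (s : 'S_N) : (perm_mx s : 'M[C]_N)^T *m perm_mx s = 1%:M.
Proof. by rewrite tr_perm_mx -perm_mxM mulVg perm_mx1. Qed.

Lemma perm_tC (s : 'S_N) : ((perm_mx s : 'M[C]_N)^T)^t* = perm_mx s.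
Proof. by apply/matrixP => i j; rewrite !mxE conjC_nat. Qed.
Lemma massoc (A B Cc D E F G : 'M[C]_N) :
  A *m (B *m (Cc *m D *m E) *m F) *m G = A *m B *m Cc *m D *m (E *m F *m G).
Proof. by rewrite !mulmxA. Qed.

Lemma spec_conj (X Y U V : 'M[C]_N) (d e : 'rV[R]_N) :
spec_decomp X (U, d) -> spec_decomp Y (V, e) ->
(forall k, complex.Re (\tr (X ^+ k)) = complex.Re (\tr (Y ^+ k))) ->
exists W : 'M[C]_N, [/\ W \is unitarymx, W^t* *m W = 1%:M & Y = W^t* *m X *m W].
Proof.
move=> HX HY H; have [s Hs] := spec_perm HX HY H.
case: HX => /= Uu [_ XE]; case: HY => /= Vu [_ YE].
pose P : 'M[C]_N := perm_mx s.
have De : diag_mx (map_mx RtoC e) = P *m diag_mx (map_mx RtoC d) *m P^T.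
rewrite tr_perm_mx -col_permE -row_permE; apply/matrixP => i j.
rewrite !mxE (inj_eq perm_inj) Hs //.
have Dd : diag_mx (map_mx RtoC d) = U *m X *m U^t*.
  rewrite XE. rewrite !mulmxA. rewrite (unitarymxP Uu). rewrite mul1mx -mulmxA (unitarymxP Uu) mulmx1. done.
pose W := U^t* *m P^T *m V.
have WtE : W^t* = V^t* *m P *m U by rewrite /W !trC_mul trmxCK perm_tC mulmxA.
have Wu : W \is unitarymx.
apply/unitarymxP; rewrite WtE /W -!mulmxA [V *m (V^t* *m _)]mulmxA (unitarymxP Vu) mul1mx.
  rewrite [P^T *m (P *m U)]mulmxA perm_unit mul1mx unit_tV. done. exact: Uu.
exists W; split. exact: Wu. exact: (unit_tV Wu).
rewrite WtE YE De Dd /W. exact: massoc.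
Qed.

Lemma mxpowR_E (b : 'M[C]_N) a : (exists Ud, spec_decomp b Ud) ->
  exists U d, spec_decomp b (U, d) /\
    mxpowR b a = U^t* *m diag_mx (map_mx (fun x => RtoC (powR x a)) d) *m U.
Proof.
move=> ex; move: (xgetPex (1%:M, 0) ex); rewrite /mxpowR.
by case: (xget _ _) => U d H; exists U, d.
Qed.

Lemma mxpowR_comm (b : 'M[C]_N) a : (exists Ud, spec_decomp b Ud) ->
  mxpowR b a *m b = b *m mxpowR b a.
Proof.
move=> /(mxpowR_E a) [U [d [[/= Uu [_ bE]] ->]]].
rewrite [in LHS]bE [in RHS]bE.
set D1 := diag_mx _; set D2 := diag_mx (map_mx RtoC d).
have E1 : U^t* *m D1 *m U *m (U^t* *m D2 *m U) = U^t* *m (D1 *m D2) *m U.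
  by rewrite !mulmxA -[U^t* *m D1 *m U *m U^t*]mulmxA (unitarymxP Uu) mulmx1.
have E2 : U^t* *m D2 *m U *m (U^t* *m D1 *m U) = U^t* *m (D2 *m D1) *m U.
  by rewrite !mulmxA -[U^t* *m D2 *m U *m U^t*]mulmxA (unitarymxP Uu) mulmx1.
by rewrite E1 E2 /D1 /D2 diag_mxC.
Qed.

Lemma mxpowR_tr (b : 'M[C]_N) a : (exists Ud, spec_decomp b Ud) ->
  exists U d, spec_decomp b (U, d) /\
    complex.Re (\tr (mxpowR b a)) = \sum_i powR (d 0 i) a.
Proof.
move=> /(mxpowR_E a) [U [d [H ->]]]; exists U, d; split => //.
rewrite tr_conj; last by case: H.
rewrite mxtrace_diag Re_sum; apply: eq_bigr => i _; rewrite !mxE //.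
Qed.

Lemma trpow_eq (X Y : 'M[C]_N) a :
  (exists Ud, spec_decomp X Ud) -> (exists Ud, spec_decomp Y Ud) ->
  (forall k, complex.Re (\tr (X ^+ k)) = complex.Re (\tr (Y ^+ k))) ->
  complex.Re (\tr (mxpowR X a)) = complex.Re (\tr (mxpowR Y a)).
Proof.
move=> eX eY H.
have [U [d [HX ->]]] := mxpowR_tr a eX.
have [V [e [HY ->]]] := mxpowR_tr a eY.
have [s Hs] := spec_perm HX HY H.
under [RHS]eq_bigr do rewrite Hs.
by rewrite (reindex_inj (@perm_inj _ s)).
Qed.
End D.

Lemma rank_ker_conj (F : fieldType) n (W' W A : 'M[F]_n) : W *m W' = 1%:M -> W' *m W = 1%:M ->
  \rank (kermx (W' *m A *m W)) = \rank (kermx A).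
Proof.
move=> h1 h2; rewrite !mxrank_ker; congr (_ - _)%N.
apply/eqP; rewrite eqn_leq; apply/andP; split.
  apply: leq_trans (mxrankM_maxl _ _) _; exact: mxrankM_maxr.
have E : A = W *m (W' *m A *m W) *m W'.
  by rewrite !mulmxA h1 mul1mx -mulmxA h1 mulmx1.
rewrite {1}E; apply: leq_trans (mxrankM_maxl _ _) _; exact: mxrankM_maxr.
Qed.

Section E.
Local Set Implicit Arguments.
Local Unset Strict Implicit.
Variable R : realType.
Local Notation C := (R[i]).
Variable N : nat.

Lemma eig_conj (W X : 'M[C]_N) lam : W \is unitarymx -> W^t* *m W = 1%:M ->
  \rank (eigenspace (W^t* *m X *m W) lam) = \rank (eigenspace X lam).
Proof.
move=> Wu WtW.
have E : W^t* *m X *m W - lam%:M = W^t* *m (X - lam%:M) *m W.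
  rewrite mulmxBr mulmxBl. rewrite mul_mx_scalar -scalemxAl WtW. rewrite scalemx1. done.
rewrite /eigenspace E.
exact: (@rank_ker_conj C N (W^t*) W (X - lam%:M) (unitarymxP Wu) WtW).
Qed.
Lemma Re_conjM (z : C) : complex.Re (z^* * z) = complex.Re z ^+ 2 + complex.Im z ^+ 2.
Proof. by case: z => a b /=; rewrite expr2 expr2; ring. Qed.

Lemma vnormE (v : 'cV[C]_N) : vnorm v = Num.sqrt (complex.Re ((v^t* *m v) 0 0)).
Proof.
rewrite /vnorm; congr Num.sqrt; rewrite !mxE Re_sum; apply: eq_bigr => i _.
by rewrite !mxE Re_conjM.
Qed.

Lemma vnorm_iso (W : 'M[C]_N) (v : 'cV[C]_N) : W^t* *m W = 1%:M ->
  vnorm (W *m v) = vnorm v.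
Proof.
move=> WtW; rewrite !vnormE trC_mul -mulmxA [W^t* *m (W *m v)]mulmxA WtW mul1mx //.
Qed.

Lemma opnorm_conj (W X : 'M[C]_N) : W \is unitarymx -> W^t* *m W = 1%:M ->
  opnorm (W^t* *m X *m W) = opnorm X.
Proof.
move=> Wu WtW; rewrite /opnorm; congr sup.
have Wt : W^t*^t* *m W^t* = 1%:M by rewrite trmxCK (unitarymxP Wu).
apply/seteqP; split => x [v hv <-].
  exists (W *m v); first by rewrite /= (vnorm_iso _ WtW).
  by rewrite -!mulmxA (vnorm_iso _ Wt).
exists (W^t* *m v); first by rewrite /= (vnorm_iso _ Wt).
rewrite -!mulmxA (vnorm_iso _ Wt) [W *m (W^t* *m v)]mulmxA (unitarymxP Wu) mul1mx //.
Qed.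
End E.


Section M.
Local Set Implicit Arguments.
Local Unset Strict Implicit.
Variable R : realType.
Local Notation C := (R[i]).
Variable N : nat.

Lemma sq_eq (b : 'M[C]_N) : psdmx b -> b^t* *m b = b ^+ 2.
Proof. by case => -> _; rewrite expr2 mulmxE. Qed.

Lemma sq_spec (b U : 'M[C]_N) d : psdmx b -> spec_decomp b (U, d) ->
  spec_decomp (b^t* *m b) (U, \row_j d 0 j ^+ 2).
Proof.
move=> hb H; rewrite sq_eq //; have H' := H.
case: H => /= Uu [_ _]; split => //; split => /=.
  by move=> i; rewrite mxE sqr_ge0.
exact: (spec_pow 2 H').
Qed.

Lemma sq_pow (b : 'M[C]_N) k : psdmx b -> (b^t* *m b) ^+ k = b ^+ (2 * k).
Proof. by move=> hb; rewrite sq_eq // exprM. Qed.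
Lemma snorm_eq s (X Y : 'M[C]_N) :
  (exists Ud, spec_decomp (X^t* *m X) Ud) -> (exists Ud, spec_decomp (Y^t* *m Y) Ud) ->
  (forall k, complex.Re (\tr ((X^t* *m X) ^+ k)) = complex.Re (\tr ((Y^t* *m Y) ^+ k))) ->
  snorm s X = snorm s Y.
Proof. by move=> h1 h2 h3; rewrite /snorm /ntau (trpow_eq (s / 2) h1 h2 h3). Qed.
End M.

Theorem mainTheorem3 (R : realType) (n : nat) (hn : (1 <= n)%N) (N : nat)
  (K : 'M[R[i]]_N) (hK : K ^t* = - K)
  (I : set R) (hI : is_interval I)
  (b db : R -> 'M[R[i]]_N) (hb : C1_curve I b db)
  (hpos : forall t, I t -> psdmx (b t))
  (hode : forall t, I t ->
     db t = mxpowR (b t) (conj_exp (2 * n%:R) / 2) *m K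
            - K *m mxpowR (b t) (conj_exp (2 * n%:R) / 2))
  (s : R) (hs : 1 <= s) :
  forall t1 t2, I t1 -> I t2 ->
    [/\ snorm s (b t1) = snorm s (b t2),
        (forall lam : R[i], \rank (eigenspace (b t1) lam) = \rank (eigenspace (b t2) lam))
      & opnorm (b t1) = opnorm (b t2)].
Proof.
move=> t1 t2 I1 I2.
have ex : forall t, I t -> exists Ud, spec_decomp (b t) Ud.
  by move=> t It; apply: psd_spec; apply: hpos.
pose a : R := conj_exp (2 * n%:R) / 2.
have hc : forall t, I t -> mxpowR (b t) a *m b t = b t *m mxpowR (b t) a.
  by move=> t It; apply: mxpowR_comm; apply: ex.
have hd : forall t, I t -> mdw I b t (db t) by move=> t It; exact: hb.1 t It.
have Hk := tr_pow_const (A := fun t => mxpowR (b t) a) hI hd hode hc.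
have [[U1 d1] H1] := ex t1 I1; have [[U2 d2] H2] := ex t2 I2.
have [W [Wu WtW E]] := spec_conj H1 H2 (fun k => Hk k t1 t2 I1 I2).
split.
- apply: snorm_eq.
  + by exists (U1, \row_j d1 0 j ^+ 2); apply: sq_spec => //; apply: hpos.
  + by exists (U2, \row_j d2 0 j ^+ 2); apply: sq_spec => //; apply: hpos.
  + move=> k; rewrite !sq_pow; try apply: hpos => //.
    exact: Hk.
- move=> lam. rewrite E. exact: (esym (@eig_conj R N W (b t1) lam Wu WtW)).
- rewrite E. exact: (esym (@opnorm_conj R N W (b t1) Wu WtW)).
Qed.
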